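(* For every prime $p\geq 11$, $$P(p,3)\leq (p-1)!-\left\lceil \tfrac{p}{3}\right\rceil+2\leq (p-1)!-2 .$$
   Context: $S_n$ denotes the set (group) of all permutations of $[n]=\{1,\dots,n\}$, with product $\lambda\cdot\sigma$ defined by $(\lambda\cdot\sigma)(i)=\sigma(\lambda(i))$. An adjacent transposition is a transposition $(i,i+1)$ with $1\leq i\leq n-1$. The Kendall $\tau$-distance $d_K(\rho,\pi)$ between $\rho,\pi\in S_n$ is the minimum number of adjacent transpositions whose product equals $\rho\pi^{-1}$ (equivalently, the graph distance in the Cayley graph of $S_n$ with respect to the set of adjacent transpositions). A permutation code of length $n$ is a non-empty subset of $S_n$; $P(n,d)$ denotes the maximum size of a permutation code $C\subseteq S_n$ such that $d_K(x,y)\geq d$ for all distinct $x,y\in C$. *)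

(* Defs.v *)
From mathcomp Require Import all_boot all_order all_fingroup.
Set Implicit Arguments. Unset Strict Implicit. Unset Printing Implicit Defensive.
Import GroupScope.

(* Permutations of [n] are represented by 'S_n = {perm 'I_n} (points 0..n-1).
   MathComp's product satisfies (s * t) x = t (s x), i.e. exactly the paper's
   convention (lambda . sigma)(i) = sigma(lambda(i)). *)

Definition adj_tperm n (i : 'I_n) : 'S_n :=
  if insub (i.+1) is Some j then tperm i j else 1.
Definition adj_word n (w : seq 'I_n) : bool := all (fun i : 'I_n => i.+1 < n) w.
Definition word_prod n (w : seq 'I_n) : 'S_n := \prod_(i <- w) adj_tperm i.

Definition prod_of_k_adj n (k : nat) (s : 'S_n) : bool :=
  [exists w : k.-tuple 'I_n, adj_word w && (word_prod w == s)].

(* Every permutation of [n] is a product of at most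
   n*n adjacent transpositions, so searching k in 0 .. n*n gives the true
   minimum. *)
Definition dK n (rho pi : 'S_n) : nat :=
  find (fun k => prod_of_k_adj k (rho * pi^-1)) (iota 0 (n * n).+1).

(* P(n,d): maximum size of a code C in S_n with d_K(x,y) >= d for all distinct
   x, y in C.  (Nonemptiness of C is irrelevant for the maximum: singletons
   qualify.) *)
Definition P_kendall n (d : nat) : nat :=
  \max_(C : {set 'S_n} | [forall x in C, forall y in C, (x != y) ==> (d <= dK x y)]) #|C|.

(* Main.v *)
Require Import Defs.
From mathcomp Require Import all_boot all_order all_fingroup.
From mathcomp Require Import zify.
Set Implicit Arguments. Unset Strict Implicit. Unset Printing Implicit Defensive.

Definition Sset n : {set 'S_n} :=
  1%g |: [set adj_tperm t | t in [set t : 'I_n | t.+1 < n]].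

Lemma adjE n (t : 'I_n) (h : t.+1 < n) : adj_tperm t = tperm t (Ordinal h).
Proof.
rewrite /adj_tperm; case: insubP => [j _ hj|]; last by rewrite h.
by congr tperm; apply: val_inj.
Qed.

Lemma adjV n (t : 'I_n) : ((adj_tperm t)^-1 = adj_tperm t)%g.
Proof. by rewrite /adj_tperm; case: insub => [j|]; rewrite ?tpermV ?invg1. Qed.

Lemma S_inv n s : s \in Sset n -> (s^-1 = s)%g.
Proof.
rewrite !inE => /orP[/eqP ->|/imsetP[t _ ->]]; first by rewrite invg1.
exact: adjV.
Qed.

Lemma S_word n s : s \in Sset n ->
  exists w : seq 'I_n, [/\ size w <= 1, adj_word w & word_prod w = s].
Proof.
rewrite !inE => /orP[/eqP ->|/imsetP[t]]; first by exists [::]; rewrite /word_prod big_nil.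
rewrite inE => ht ->; exists [:: t]; split => //; first by rewrite /adj_word /= ht.
by rewrite /word_prod big_seq1.
Qed.

Lemma dK_le n (x y : 'S_n) (w : seq 'I_n) : adj_word w ->
  word_prod w = (x * y^-1)%g -> size w <= n * n -> dK x y <= size w.
Proof.
move=> hw hp hs; rewrite /dK; case: leqP => // H.
have := before_find 0 H; rewrite nth_iota ?add0n // => /negbT/negP H0; exfalso; apply: H0; apply/existsP.
by exists (in_tuple w); rewrite hw /= hp.
Qed.

Lemma ball_disj n (C : {set 'S_n}) (c c' s s' : 'S_n) : 2 <= n ->
  [forall x in C, forall y in C, (x != y) ==> (3 <= dK x y)] ->
  c \in C -> c' \in C -> s \in Sset n -> s' \in Sset n ->
  (s * c = s' * c')%g -> c = c'.
Proof.
move=> n2 /forall_inP HC cC c'C sS s'S e.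
apply/eqP; apply: contraT => neq.
have := forall_inP (HC c cC) c' c'C; rewrite neq /= => h3.
have [w [w1 aw pw]] := S_word sS.
have [w' [w1' aw' pw']] := S_word s'S.
have : dK c c' <= size (w ++ w').
  apply: dK_le.
  - by rewrite /adj_word all_cat; apply/andP; split; [exact: aw | exact: aw'].
  - rewrite /word_prod big_cat /= -/(word_prod w) -/(word_prod w') pw pw'.
    have -> : c = (s^-1 * (s' * c'))%g by rewrite -e mulKg.
    by rewrite (S_inv sS) mulgA mulgK.
  - rewrite size_cat; nia.
rewrite size_cat; lia.
Qed.

Lemma card_fiber n (I v : 'I_n.+1) :
  #|[set x : 'S_n.+1 | x I == v]| = n`!.
Proof.
have le : forall a b, #|[set x : 'S_n.+1 | x I == a]| <= #|[set x : 'S_n.+1 | x I == b]|.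
  move=> a b; have <- := card_imset [set x : 'S_n.+1 | x I == a] (mulIg (tperm a b)).
  apply: subset_leq_card; apply/subsetP => y /imsetP[x]; rewrite inE => /eqP h ->.
  by rewrite inE permM h tpermL.
have eq : forall a, #|[set x : 'S_n.+1 | x I == a]| = #|[set x : 'S_n.+1 | x I == v]|.
  by move=> a; apply/anti_leq; rewrite !le.
have : #|{perm 'I_n.+1}| = \sum_(a : 'I_n.+1) #|[set x : 'S_n.+1 | x I == a]|.
  rewrite -sum1_card (partition_big (fun x : 'S_n.+1 => x I) xpredT) //=.
  by apply: eq_bigr => a _; rewrite -sum1dep_card.
rewrite card_Sn (eq_bigr _ (fun a _ => eq a)) sum_nat_const card_ord factS.
by move/eqP; rewrite eqn_pmul2l // => /eqP.
Qed.

Lemma adj_val n (t : 'I_n) (h : t.+1 < n) : val (adj_tperm t t) = t.+1.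
Proof. by rewrite (adjE h) tpermL. Qed.

Lemma adj_fix n (t x : 'I_n) : x != t -> val x != t.+1 -> adj_tperm t x = x.
Proof.
move=> h1 h2; rewrite /adj_tperm; case: insubP => [j _ hj|]; last by rewrite perm1.
rewrite tpermD //; first by rewrite eq_sym.
by apply/eqP => e; move: h2; rewrite -e hj eqxx.
Qed.

Lemma adj_inj n : {in [set t : 'I_n | t.+1 < n] &, injective (@adj_tperm n)}.
Proof.
move=> t1 t2; rewrite !inE => h1 h2 e.
have := adj_val h1; rewrite e (adjE h2).
case: tpermP => [->//| -> /= |ne1 ne2] /=; lia.
Qed.

Lemma adj_neq1 n (t : 'I_n) : t.+1 < n -> adj_tperm t != 1%g.
Proof.
move=> h; apply/eqP => e; have := adj_val h; rewrite e perm1 => E; have E1 : (t:nat) = t.+1 := E; lia.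
Qed.

Lemma S_fix n (i : nat) : 0 < n -> i < n.+1 ->
  n.+1 - ((0 < i) + (i.+1 < n.+1)) <=
  #|[set s in Sset n.+1 | s (inord i : 'I_n.+1) == inord i]|.
Proof.
move=> n0 hi; set I : 'I_n.+1 := inord i.
have vI : nat_of_ord I = i by rewrite /I inordK.
set T := [set t : 'I_n.+1 | [&& t.+1 < n.+1, t != I & t.+1 != i]].
have sub : 1%g |: [set adj_tperm t | t in T] \subset [set s in Sset n.+1 | s I == I].
  apply/subsetP => s; rewrite !inE => /orP[/eqP ->|/imsetP[t]].
    by rewrite perm1 !eqxx.
  rewrite inE => /and3P[h1 h2 h3] ->.
  apply/andP; split.
    by apply/orP; right; apply/imsetP; exists t; rewrite ?inE.
  rewrite adj_fix ?eqxx //; first by rewrite eq_sym.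
  by rewrite (_ : \val I = i) // eq_sym.
have c1 : #|1%g |: [set adj_tperm t | t in T]| = 1 + #|T|.
  rewrite cardsU1 card_in_imset.
    congr (_ + _); apply/eqP; rewrite eqb1; apply/imsetP => -[t].
    by rewrite inE => /and3P[h1 _ _] /eqP; rewrite eq_sym (negbTE (adj_neq1 h1)).
  move=> t1 t2; rewrite !inE => /and3P[h1 _ _] /and3P[h2 _ _].
  by apply: adj_inj; rewrite inE.
have cT : #|~: T| <= 1 + ((0 < i) + (i.+1 < n.+1)).
  have mem : forall t, t \in ~: T -> [|| t == ord_max, t == I | (val t == i.-1) && (0 < i)].
    move=> t; rewrite !inE => H.
    case: (eqVneq t I) => [->|ne]; first by rewrite orbT.
    case: (ltnP t.+1 n.+1) => h; last first.
      by apply/orP; left; apply/eqP/val_inj => /=; have := ltn_ord t; lia.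
    move: H; rewrite ne h /= negbK => /eqP e.
    rewrite orbC /=; apply/orP; left; apply/andP; split; [apply/eqP|]; lia.
  case: (posnP i) => [i0|ip].
    have : ~: T \subset [set ord_max; I].
      apply/subsetP => t /mem; rewrite !inE i0 /=; case/orP => [->//|]. 
      by case/orP => [->|/andP[]]; rewrite ?orbT.
    move/subset_leq_card; rewrite cards2; rewrite i0 /=; rewrite (_ : 1 < n.+1 = true) //; case: (_ != _) => /=; lia.
  case: (ltnP i.+1 n.+1) => hb.
    have : ~: T \subset ord_max |: [set I; inord i.-1].
      apply/subsetP => t /mem; rewrite !inE; case/orP => [->//|].
      case/orP => [->|/andP[/eqP h _]]; first by rewrite orbT.
      by rewrite (_ : t = inord i.-1) ?eqxx ?orbT //; apply/val_inj; rewrite /= inordK; [exact: h|lia].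
    move/subset_leq_card; rewrite cardsU1 cards2 /=; case: (_ \notin _); case: (_ != _) => /=; lia.
  have : ~: T \subset [set I; inord i.-1].
    apply/subsetP => t /mem; rewrite !inE; case/orP => [/eqP e|].
      by rewrite (_ : t = I) ?eqxx //; apply/val_inj; rewrite e /= vI; lia.
    case/orP => [->//|/andP[/eqP h _]].
    by rewrite (_ : t = inord i.-1) ?eqxx ?orbT //; apply/val_inj; rewrite /= inordK; [exact: h|lia].
  move/subset_leq_card; rewrite cards2 /=; case: (_ != _) => /=; lia.
have := cardsC T; rewrite card_ord => cTT.
have := subset_leq_card sub; rewrite c1; move: cT; move: (nat_of_bool (0 < i)) (nat_of_bool (i.+1 < n.+1)) => a b; move: cTT; move: #|~: T| #|T| #|[set s in Sset n.+1 | s I == I]| => x y w. lia.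
Qed.

Definition zc n (c : 'S_n.+1) (j : nat) : bool := c (inord j) == ord0.

Lemma zc_excl n (c : 'S_n.+1) j k : j < n.+1 -> k < n.+1 -> j != k -> zc c j -> zc c k = false.
Proof.
move=> hj hk ne /eqP hj0; apply/negbTE; rewrite /zc -hj0.
rewrite (inj_eq perm_inj); apply: contra ne => /eqP /(congr1 val).
by rewrite /= !inordK // => ->.
Qed.

Lemma count_c n (c : 'S_n.+1) i : 0 < n -> i < n.+1 ->
  (n.+1 - ((0 < i) + (i.+1 < n.+1))) * zc c i
  + (if 0 < i then (zc c i.-1 : nat) else 0) + (if i.+1 < n.+1 then (zc c i.+1 : nat) else 0)
  <= #|[set s in Sset n.+1 | c (s (inord i)) == ord0]|.
Proof.
move=> n0 hi; set I : 'I_n.+1 := inord i.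
have vI : nat_of_ord I = i by rewrite /I inordK.
case: (boolP (zc c i)) => hz.
  rewrite muln1.
  have e1 : (if 0 < i then (zc c i.-1 : nat) else 0) = 0.
    by case: (posnP i) => // ip; rewrite (zc_excl _ _ _ hz) //; lia.
  have e2 : (if i.+1 < n.+1 then (zc c i.+1 : nat) else 0) = 0.
    by case: ltnP => // ib; rewrite (zc_excl _ _ _ hz) //; lia.
  rewrite e1 e2 !addn0;
  (apply: leq_trans (S_fix n0 hi) _; apply: subset_leq_card; apply/subsetP => s;
   rewrite !inE => /andP[-> /eqP ->]; exact: hz).
rewrite muln0 add0n.
have ne : (i.-1 != i.+1) by lia.
case: (posnP i) => [i0|ip] /=.
  case: ifP => // ib; case: (boolP (zc c i.+1)) => // h1.
  apply/card_gt0P; exists (adj_tperm I); rewrite !inE; apply/andP; split.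
    by apply/orP; right; apply/imsetP; exists I; rewrite ?inE // vI.
  have hI : I.+1 < n.+1 by rewrite vI.
  by rewrite (adjE hI) tpermL; move: h1; rewrite /zc; congr (c _ == _); apply/val_inj; rewrite /= inordK // vI.
case: (boolP (zc c i.-1)) => h0.
  have -> : (if i.+1 < n.+1 then (zc c i.+1 : nat) else 0) = 0.
    by case: ifP => // ib; rewrite (zc_excl _ _ _ h0) //; lia.
  rewrite addn0; set t : 'I_n.+1 := inord i.-1.
  have vt : nat_of_ord t = i.-1 by rewrite /t inordK; lia.
  apply/card_gt0P; exists (adj_tperm t); rewrite !inE; apply/andP; split.
    by apply/orP; right; apply/imsetP; exists t; rewrite ?inE // vt; lia.
  have ht : t.+1 < n.+1 by rewrite vt; lia.
  rewrite (adjE ht) (_ : I = Ordinal ht) ?tpermR //; last by apply/val_inj; rewrite /= vI vt; lia.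
rewrite add0n; case: ifP => // ib; case: (boolP (zc c i.+1)) => // h1.
apply/card_gt0P; exists (adj_tperm I); rewrite !inE; apply/andP; split.
  by apply/orP; right; apply/imsetP; exists I; rewrite ?inE // vI.
have hI : I.+1 < n.+1 by rewrite vI.
by rewrite (adjE hI) tpermL; move: h1; rewrite /zc; congr (c _ == _); apply/val_inj; rewrite /= inordK // vI.
Qed.

Lemma sum_zc n (C : {set 'S_n.+1}) j :
  \sum_(c in C) (zc c j : nat) = #|[set c in C | zc c j]|.
Proof.
rewrite -sum1dep_card big_mkcondr /=; apply: eq_bigr => c _.
by case: (zc c j).
Qed.

Lemma balls_le n (C : {set 'S_n.+1}) (I : 'I_n.+1) : 0 < n ->
  [forall x in C, forall y in C, (x != y) ==> (3 <= dK x y)] ->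
  \sum_(c in C) #|[set s in Sset n.+1 | c (s I) == ord0]| <= n`!.
Proof.
move=> n0 HC.
rewrite (eq_bigr (fun c : 'S_n.+1 => \sum_(s : 'S_n.+1 | (s \in Sset n.+1) && (c (s I) == ord0)) 1));
  last by move=> c _; rewrite sum1dep_card.
rewrite pair_big_dep sum1dep_card.
set D := [set _ | _].
rewrite -(card_fiber I (ord0 : 'I_n.+1)).
have inj : {in D &, injective (fun cs : 'S_n.+1 * 'S_n.+1 => (cs.2 * cs.1)%g)}.
  move=> [c s] [c' s']; rewrite !inE /= => /andP[cC /andP[sS _]] /andP[c'C /andP[s'S _]] e.
  have sS1 : s \in Sset n.+1 by rewrite /Sset !inE.
  have s'S1 : s' \in Sset n.+1 by rewrite /Sset !inE.
  have ec := ball_disj (n0 : 1 < n.+1) HC cC c'C sS1 s'S1 e.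
  by move: e; rewrite ec => /mulIg ->.
rewrite -(card_in_imset inj); apply: subset_leq_card; apply/subsetP => x /imsetP[[c s]].
by rewrite inE /= => /andP[_ /andP[_ h]] ->; rewrite inE permM.
Qed.

Definition zz n (C : {set 'S_n.+1}) j := #|[set c in C | zc c j]|.

Lemma constraint n (C : {set 'S_n.+1}) i : 0 < n ->
  [forall x in C, forall y in C, (x != y) ==> (3 <= dK x y)] -> i < n.+1 ->
  (n.+1 - ((0 < i) + (i.+1 < n.+1))) * zz C i
  + (if 0 < i then zz C i.-1 else 0) + (if i.+1 < n.+1 then zz C i.+1 else 0) <= n`!.
Proof.
move=> n0 HC hi; rewrite /zz.
apply: leq_trans (balls_le (inord i) n0 HC).
rewrite [X in X <= _](_ : _ = \sum_(c in C) ((n.+1 - ((0 < i) + (i.+1 < n.+1))) * (zc c i : nat)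
  + (if 0 < i then (zc c i.-1 : nat) else 0) + (if i.+1 < n.+1 then (zc c i.+1 : nat) else 0))).
  by apply: leq_sum => c _; exact: count_c.
rewrite !big_split /= -big_distrr /= sum_zc.
by case: ifP => _; case: ifP => _; rewrite ?sum_zc ?big1.
Qed.
Lemma shiftL p (f : nat -> nat) :
  \sum_(i < p) (if 0 < i then f i.-1 else 0) <= \sum_(i < p) f i.
Proof.
case: p => [|p]; first by rewrite !big_ord0.
rewrite big_ord_recl /= add0n big_ord_recr /=.
apply: leq_trans (leq_addr _ _); by [].
Qed.

Lemma shiftR p (f : nat -> nat) :
  \sum_(i < p) (if i.+1 < p then f i.+1 else 0) <= \sum_(i < p) f i.
Proof.
case: p => [|p]; first by rewrite !big_ord0.
rewrite big_ord_recr /= ltnn addn0 big_ord_recl /=.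
apply: leq_trans (leq_addl _ _).
by apply: leq_sum => i _; rewrite ltnS ltn_ord.
Qed.

Lemma loc (p M N x y w : nat) (a b : bool): 10 <= p -> p*M = N.+1 ->
  (p - (a+b))*x + a*y + b*w <= N ->
  1 <= a*(M-y) + (M-x) + b*(M-w) /\ (p-2)*(x-M) <= a*(M-y) + b*(M-w).
Proof.
move=> hp hM.
case: a; case: b => /= h; rewrite ?mul1n ?mul0n ?addn0 ?add0n in h *;
 (case: (leqP M x) => hx; [ | have -> : x - M = 0 by lia]);
 [ have -> : x = M + (x - M) by lia | rewrite muln0 | 
   have -> : x = M + (x - M) by lia | rewrite muln0 |
   have -> : x = M + (x - M) by lia | rewrite muln0 |
   have -> : x = M + (x - M) by lia | rewrite muln0 ];
 move: h; rewrite ?mulnDr; set t := x - M; try nia.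
Qed.

Lemma core (p M N : nat) (z : nat -> nat) :
  10 <= p -> p * M = N.+1 ->
  (forall i, i < p -> (p - ((0 < i) + (i.+1 < p))) * z i
     + (if 0 < i then z i.-1 else 0) + (if i.+1 < p then z i.+1 else 0) <= N) ->
  \sum_(i < p) z i + (p + 2) %/ 3 <= N + 2.
Proof.
move=> hp hM hz.
pose P i := M - z i. pose Ng i := z i - M.
have HL : forall i, i < p -> 1 <= (if 0 < i then P i.-1 else 0) + P i
                               + (if i.+1 < p then P i.+1 else 0) /\
   (p - 2) * Ng i <= (if 0 < i then P i.-1 else 0)
                               + (if i.+1 < p then P i.+1 else 0).
  move=> i ip; have := hz i ip; rewrite /P /Ng.
  have e : forall (c : bool) k, (if c then k else 0) = c * k by case => k; rewrite ?mul1n ?mul0n.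
  rewrite !e => h; exact: loc hp hM h.
have H1 i (ip : i < p) := (HL i ip).1.
have H2 i (ip : i < p) := (HL i ip).2.
set X := \sum_(i < p) P i.
set A := \sum_(i < p) Ng i.
have H3 : p <= 3 * X.
  have : \sum_(i < p) 1 <= \sum_(i < p) ((if 0 < i then P i.-1 else 0) + P i
                               + (if i.+1 < p then P i.+1 else 0)).
    by apply: leq_sum => i _; exact: H1.
  rewrite sum1_card card_ord !big_split /=.
  have := shiftL p P; have := shiftR p P; rewrite -/X.
  move: (\sum_(i < p) _) (\sum_(i < p) _) => s1 s2; lia.
have H4 : (p - 2) * A <= 2 * X.
  have : \sum_(i < p) (p - 2) * Ng i <= \sum_(i < p) ((if 0 < i then P i.-1 else 0)
                               + (if i.+1 < p then P i.+1 else 0)).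
    by apply: leq_sum => i _; exact: H2.
  rewrite -big_distrr /= !big_split /=.
  have := shiftL p P; have := shiftR p P; rewrite -/X -/A.
  move: (\sum_(i < p) _) (\sum_(i < p) _) => s1 s2; lia.
have H5 : \sum_(i < p) z i + X = p * M + A.
  rewrite -big_split /= /A.
  have -> : p * M = \sum_(i < p) M by rewrite sum_nat_const card_ord.
  rewrite -big_split /=; apply: eq_bigr => i _; rewrite /P /Ng; lia.
set c := (p + 2) %/ 3.
have hc1 : p <= 3 * c by rewrite /c; lia.
have hc2 : 3 * c <= p + 2 by rewrite /c; lia.
have hXc : c <= X by lia.
have : (p - 2) * (A + c) <= (p - 2) * (X + 1) by nia.
rewrite leq_pmul2l; last lia.
lia.
Qed.

Lemma cardC_sum n (C : {set 'S_n.+1}) : #|C| = \sum_(j < n.+1) zz C j.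
Proof.
rewrite /zz; under eq_bigr do rewrite -sum_zc.
rewrite exchange_big /= -sum1_card; apply: eq_bigr => c _.
rewrite (bigD1 (c^-1 ord0)%g) //= /zc inord_val permKV eqxx big1 // => j ne.
rewrite inord_val; case: eqP => // e; case/eqP: ne; by rewrite -e permK.
Qed.

Theorem theorem1p1 (p : nat) :
  prime p -> 11 <= p ->
  P_kendall p 3 <= (p.-1)`! - (p + 2) %/ 3 + 2 /\
  (p.-1)`! - (p + 2) %/ 3 + 2 <= (p.-1)`! - 2.
Proof.
case: p => [|n] // pr hp /=.
have fn := fact_geq n.
split; last by lia.
apply/bigmax_leqP => C HC.
have n0 : 0 < n by lia.
move: pr; rewrite Wilson //= => /dvdnP[M hM].
have := @core n.+1 M n`! (zz C) (ltnW hp) (esym (etrans hM (mulnC _ _))).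
rewrite -cardC_sum; move=> H; have := H (fun i hi => constraint n0 HC hi).
have h3 : (n.+1 + 2) %/ 3 <= n.
  have := leq_trunc_div (n.+1 + 2) 3; move: hp; move: ((n.+1 + 2) %/ 3) => q; lia.
move: fn h3; move: (n`!) ((n.+1 + 2) %/ 3) => F D; move: #|C| => k; lia.
Qed.
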